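(* Let $\mathbb{k}$ be a commutative ring, $M$ a $\mathbb{k}$-module with a descending filtration by $\mathbb{k}$-submodules $M=M_0\supseteq M_1\supseteq\cdots$, $G^{(1)}\subseteq GL^{(1)}_{\mathbb{k}}(M)$ a subgroup and $T\subseteq \mathrm{End}^{(1)}_{\mathbb{k}}(M)$ a $\mathbb{k}$-submodule such that the pair $(T,G^{(1)})$ is of pointwise weak Lie type, i.e. for every $i\ge1$: (a) for every $\xi\in T^{(i)}$ and $z\in M$ there exists $g\in G^{(i)}$ such that, if $\mathrm{ord}(\xi(z))<\infty$, then $\mathrm{ord}((g-\mathrm{Id}-\xi)(z))\ge 2\,\mathrm{ord}(\xi)+\mathrm{ord}(z)$; (b) for every $g\in G^{(i)}$ and $z\in M$ there exists $\xi\in T^{(i)}$ such that, if $\mathrm{ord}((g-\mathrm{Id})(z))<\infty$, then $\mathrm{ord}((g-\mathrm{Id}-\xi)(z))\ge 2\,\mathrm{ord}(g-\mathrm{Id})+\mathrm{ord}(z)$. Let $z\in M$ and $N\ge 0$ an integer. Then: 1. If $\overline{T^{(k)}(z)}\supseteq M_{N+k+\mathrm{ord}(z)}$ for every $k\ge1$, then $\overline{G^{(k)}z}\supseteq\{z\}+M_{N+k+\mathrm{ord}(z)}$ for every $k>N$. 2. If $\overline{G^{(k)}z}\supseteq\{z\}+M_{N+k+\mathrm{ord}(z)}$ for every $k\ge1$, then $\overline{T^{(k)}(z)}\supseteq M_{N+k+\mathrm{ord}(z)}$ for every $k>N$.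
   Context: For $z\in M$, $\mathrm{ord}(z)=\sup\{j: z\in M_j\}$. For $i\ge0$, $\mathrm{End}^{(i)}_{\mathbb{k}}(M)=\{\phi\in \mathrm{End}_{\mathbb{k}}(M): \phi(M_j)\subseteq M_{j+i}\ \forall j\ge 0\}$, and for $\phi\in\mathrm{End}_{\mathbb{k}}(M)$, $\mathrm{ord}(\phi)=\sup\{j:\phi\in\mathrm{End}^{(j)}_{\mathbb{k}}(M)\}$. $GL^{(0)}_{\mathbb{k}}(M)$ is the group of $\mathbb{k}$-linear automorphisms $g$ with $g(M_j)\subseteq M_j$, $g^{-1}(M_j)\subseteq M_j$ for all $j$; for $i\ge1$, $GL^{(i)}_{\mathbb{k}}(M)=\{g\in GL^{(0)}_{\mathbb{k}}(M): g-\mathrm{Id},g^{-1}-\mathrm{Id}\in\mathrm{End}^{(i)}_{\mathbb{k}}(M)\}$. $G^{(i)}=G^{(1)}\cap GL^{(i)}_{\mathbb{k}}(M)$, $T^{(i)}=T\cap\mathrm{End}^{(i)}_{\mathbb{k}}(M)$, $T^{(k)}(z)=\{\xi(z):\xi\in T^{(k)}\}$, $G^{(k)}z$ is the orbit of $z$. For $X\subseteq M$, $\overline{X}=\bigcap_{j\ge1}(X+M_j)$. *)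

(* Defs.v *)
From mathcomp Require Import all_boot all_algebra.
From Stdlib Require Import ClassicalEpsilon.
Set Implicit Arguments. Unset Strict Implicit. Unset Printing Implicit Defensive.
Import GRing.Theory.
Local Open Scope ring_scope.

(* Extended naturals N ∪ {∞}: [None] is ∞. *)
Definition enat := option nat.

Definition eadd (a b : enat) : enat :=
  match a, b with Some m, Some n => Some (m + n)%N | _, _ => None end.

Definition ele (a b : enat) : Prop :=
  match a, b with
  | _, None => True
  | None, Some _ => False
  | Some m, Some n => (m <= n)%N
  end.

Definition efin (a : enat) : Prop := a <> None.

Definition is_esup (S : nat -> Prop) (o : enat) : Prop :=
  match o with
  | Some n => S n /\ (forall j, S j -> (j <= n)%N)
  | None => forall j, exists2 j', (j <= j')%N & S j'
  end.

Definition esup (S : nat -> Prop) : enat :=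
  epsilon (inhabits None) (is_esup S).

Section Filtered.
Variables (R : comPzRingType) (M : lmodType R) (Mf : nat -> M -> Prop).

(* Mf n is the n-th filtration step M_n; M_∞ := ⋂_j M_j *)
Definition Mfe (o : enat) (w : M) : Prop :=
  match o with Some n => Mf n w | None => forall j, Mf j w end.

Definition ordz (z : M) : enat := esup (fun j => Mf j z).

Definition End_i (i : nat) (phi : M -> M) : Prop :=
  linear phi /\ forall j w, Mf j w -> Mf (j + i) (phi w).

Definition ordE (phi : M -> M) : enat := esup (fun j => End_i j phi).

Definition Id : M -> M := id.
Definition fsub (f g : M -> M) : M -> M := fun w => f w - g w.

Definition GL0_inv (g h : M -> M) : Prop :=
  [/\ linear g, cancel g h, cancel h g,
      (forall j w, Mf j w -> Mf j (g w)) & (forall j w, Mf j w -> Mf j (h w))].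

Definition GL0 (g : M -> M) : Prop := exists h, GL0_inv g h.

Definition GLi (i : nat) (g : M -> M) : Prop :=
  exists h, GL0_inv g h /\ End_i i (fsub g Id) /\ End_i i (fsub h Id).

Definition is_subgroup_GL1 (G : (M -> M) -> Prop) : Prop :=
  [/\ (forall g, G g -> GLi 1 g), G Id,
      (forall g h, G g -> G h -> G (g \o h)) &
      (forall g, G g -> exists2 h, G h & cancel g h /\ cancel h g)].

Definition is_submodule_End1 (T : (M -> M) -> Prop) : Prop :=
  [/\ (forall xi, T xi -> End_i 1 xi), T (fun _ => 0) &
      (forall (a : R) xi eta, T xi -> T eta -> T (fun w => a *: xi w + eta w))].

Definition Gi (G : (M -> M) -> Prop) (i : nat) (g : M -> M) : Prop := G g /\ GLi i g.
Definition Ti (T : (M -> M) -> Prop) (i : nat) (xi : M -> M) : Prop := T xi /\ End_i i xi.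

Definition pointwise_weak_Lie (T G : (M -> M) -> Prop) : Prop :=
  forall i, (1 <= i)%N ->
  (forall xi z, Ti T i xi ->
     exists g, Gi G i g /\
       (efin (ordz (xi z)) ->
        ele (eadd (eadd (ordE xi) (ordE xi)) (ordz z))
            (ordz (fsub (fsub g Id) xi z)))) /\
  (forall g z, Gi G i g ->
     exists xi, Ti T i xi /\
       (efin (ordz (fsub g Id z)) ->
        ele (eadd (eadd (ordE (fsub g Id)) (ordE (fsub g Id))) (ordz z))
            (ordz (fsub (fsub g Id) xi z)))).

Definition Timg (T : (M -> M) -> Prop) (k : nat) (z : M) : M -> Prop :=
  fun w => exists2 xi, Ti T k xi & w = xi z.
Definition Gorb (G : (M -> M) -> Prop) (k : nat) (z : M) : M -> Prop :=
  fun w => exists2 g, Gi G k g & w = g z.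

Definition filt_closure (X : M -> Prop) : M -> Prop :=
  fun w => forall j, (1 <= j)%N -> exists x, X x /\ exists2 m, Mf j m & w = x + m.

End Filtered.

(* Main.v *)
Require Import Defs.
From mathcomp Require Import all_boot all_algebra.
From Stdlib Require Import Classical ClassicalEpsilon.
Local Open Scope ring_scope.
Import GRing.Theory.
From mathcomp Require Import zify.
Set Implicit Arguments. Unset Strict Implicit.

Definition Fok (R : comPzRingType) (M : lmodType R) (Mf : nat -> M -> Prop) :=
  (forall j, Mf j 0 /\ (forall a u v, Mf j u -> Mf j v -> Mf j (a *: u + v))) /\
  (forall j w, Mf j.+1 w -> Mf j w).

Lemma Mf_le (R : comPzRingType) (M : lmodType R) (Mf : nat -> M -> Prop) :
  Fok Mf -> forall m n w, (m <= n)%N -> Mf n w -> Mf m w.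
Proof.
move=> [_ Hd] m n w /subnKC <-; elim: (n - m)%N => [|k IH]; first by rewrite addn0.
by rewrite addnS => /Hd.
Qed.

Lemma Mf_0 (R : comPzRingType) (M : lmodType R) (Mf : nat -> M -> Prop) :
  Fok Mf -> forall j, Mf j 0.
Proof. by move=> [H _] j; case: (H j). Qed.

Lemma Mf_add (R : comPzRingType) (M : lmodType R) (Mf : nat -> M -> Prop) :
  Fok Mf -> forall j u v, Mf j u -> Mf j v -> Mf j (u + v).
Proof. by move=> [H _] j u v Hu Hv; case: (H j) => _ /(_ 1 u v Hu Hv); rewrite scale1r. Qed.

Lemma Mf_opp (R : comPzRingType) (M : lmodType R) (Mf : nat -> M -> Prop) :
  Fok Mf -> forall j u, Mf j u -> Mf j (- u).
Proof.
move=> F j u Hu; have H0 := Mf_0 F j; case: F => H _.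
by case: (H j) => _ /(_ (-1) u 0 Hu H0); rewrite scaleN1r addr0.
Qed.

Lemma Mf_sub (R : comPzRingType) (M : lmodType R) (Mf : nat -> M -> Prop) :
  Fok Mf -> forall j u v, Mf j u -> Mf j v -> Mf j (u - v).
Proof. by move=> F j u v Hu Hv; apply: Mf_add => //; apply: Mf_opp. Qed.

Lemma esup_spec (S : nat -> Prop) : (exists j, S j) -> is_esup S (esup S).
Proof.
move=> [j0 Sj0]; rewrite /esup; apply: epsilon_spec.
case: (classic (forall j, exists2 j', (j <= j')%N & S j')) => [H|].
  by exists None.
move=> /not_all_ex_not [b Hb].
have Hlt : forall j', S j' -> (j' < b)%N.
  move=> j' Sj'; rewrite ltnNge; apply/negP => Hle; apply: Hb; by exists j'.
elim: b {Hb} Hlt => [|b IH] Hlt; first by have := Hlt _ Sj0.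
case: (classic (S b)) => [Sb|nSb].
  by exists (Some b); split => // j /Hlt.
apply: IH => j' Sj'; have := Hlt _ Sj'; rewrite ltnS leq_eqVlt => /orP [/eqP E|//].
by subst j'.
Qed.

Lemma ordz_Mf (R : comPzRingType) (M : lmodType R) (Mf : nat -> M -> Prop) :
  Fok Mf -> (forall w, Mf 0%N w) -> forall n x, ele (Some n) (ordz Mf x) -> Mf n x.
Proof.
move=> F H0 n x; have := @esup_spec (fun j => Mf j x) (ex_intro _ 0%N (H0 x)).
rewrite /ordz; case: (esup _) => [m [Hm _]|Hinf] /= Hle.
  exact: Mf_le Hle Hm.
by case: (Hinf n) => j' Hj' Sj'; apply: Mf_le Hj' Sj'.
Qed.

Lemma ordz_inf (R : comPzRingType) (M : lmodType R) (Mf : nat -> M -> Prop) :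
  Fok Mf -> (forall w, Mf 0%N w) -> forall x, ~ efin (ordz Mf x) -> forall n, Mf n x.
Proof.
move=> F H0 x Hx n; apply: ordz_Mf => //.
by case: (ordz Mf x) Hx => // m; case; rewrite /efin.
Qed.

Lemma ordE_ge (R : comPzRingType) (M : lmodType R) (Mf : nat -> M -> Prop) :
  forall k xi, End_i Mf k xi -> ele (Some k) (ordE Mf xi).
Proof.
move=> k xi H; have := @esup_spec (fun j => End_i Mf j xi) (ex_intro _ k H).
by rewrite /ordE; case: (esup _) => [m [_ Hm]|] //=; apply: Hm.
Qed.

Lemma lie_bound (k d : nat) (o x : enat) :
  ele (Some k) o -> ele (eadd (eadd o o) (Some d)) x -> ele (Some (k + k + d)%N) x.
Proof.
case: o => [a|] /=; last by case: x.
case: x => [b|] //= ka ab; apply: leq_trans ab; by rewrite !leq_add.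
Qed.

Lemma lin_id (R : comPzRingType) (M : lmodType R) : linear (@Id R M).
Proof. by []. Qed.

Lemma lin_comp (R : comPzRingType) (M : lmodType R) (f g : M -> M) :
  linear f -> linear g -> linear (f \o g).
Proof. by move=> Hf Hg a u v /=; rewrite Hg Hf. Qed.

Lemma lin_sub (R : comPzRingType) (M : lmodType R) (f g : M -> M) :
  linear f -> linear g -> linear (fsub f g).
Proof.
move=> Hf Hg a u v; rewrite /fsub Hf Hg scalerBr opprD addrACA //.
Qed.

Lemma lin_0 (R : comPzRingType) (M : lmodType R) : linear (fun _ : M => (0 : M)).
Proof. by move=> a u v; rewrite scaler0 addr0. Qed.

Lemma lin_add (R : comPzRingType) (M : lmodType R) (f g : M -> M) :
  linear f -> linear g -> linear (fun w => 1 *: f w + g w).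
Proof.
move=> Hf Hg a u v; rewrite !scale1r Hf Hg scalerDr addrACA //.
Qed.

Lemma End_le (R : comPzRingType) (M : lmodType R) (Mf : nat -> M -> Prop) :
  Fok Mf -> forall k k' f, (k <= k')%N -> End_i Mf k' f -> End_i Mf k f.
Proof.
move=> F k k' f le [Hl Hf]; split => // j w /Hf; apply: Mf_le => //.
by rewrite leq_add2l.
Qed.

Lemma End_0 (R : comPzRingType) (M : lmodType R) (Mf : nat -> M -> Prop) :
  Fok Mf -> forall k, End_i Mf k (fun _ => 0).
Proof. by move=> F k; split; [apply: lin_0 | move=> j w _; apply: Mf_0]. Qed.

Lemma End_subId (R : comPzRingType) (M : lmodType R) (Mf : nat -> M -> Prop) :
  Fok Mf -> forall k, End_i Mf k (fsub (@Id R M) (@Id _ _)).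
Proof.
move=> F k; split; first by apply: lin_sub.
by move=> j w _; rewrite /fsub subrr; apply: Mf_0.
Qed.

Lemma GL0_Id (R : comPzRingType) (M : lmodType R) (Mf : nat -> M -> Prop) :
  GL0_inv Mf (@Id R M) (@Id _ _).
Proof. by split. Qed.

Lemma Gi_Id (R : comPzRingType) (M : lmodType R) (Mf : nat -> M -> Prop) G :
  Fok Mf -> is_subgroup_GL1 Mf G -> forall k, Gi Mf G k (@Id _ _).
Proof.
move=> F [_ HI _ _] k; split => //; exists (@Id _ _); split; first exact: GL0_Id.
by split; apply: End_subId.
Qed.

Lemma End_compsub (R : comPzRingType) (M : lmodType R) (Mf : nat -> M -> Prop) :
  Fok Mf -> forall k k' (g g' : M -> M), (k <= k')%N ->
  linear g -> linear g' -> (forall j w, Mf j w -> Mf j (g' w)) ->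
  End_i Mf k (fsub g (@Id _ _)) -> End_i Mf k' (fsub g' (@Id _ _)) -> End_i Mf k (fsub (g \o g') (@Id _ _)).
Proof.
move=> F k k' g g' le Lg Lg' Pg' [_ Eg] [_ Eg']; split.
  by apply: lin_sub => //; apply: lin_comp.
move=> j w Hw; have -> : fsub (g \o g') (@Id _ _) w = fsub g (@Id _ _) (g' w) + fsub g' (@Id _ _) w.
  by rewrite /fsub /(@Id _ _) /= addrA subrK.
apply: Mf_add => //; first by apply: Eg; apply: Pg'.
apply: Mf_le (Eg' _ _ Hw) => //; by rewrite leq_add2l.
Qed.

Lemma Gi_comp (R : comPzRingType) (M : lmodType R) (Mf : nat -> M -> Prop) G :
  Fok Mf -> is_subgroup_GL1 Mf G -> forall k k' g g', (k <= k')%N ->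
  Gi Mf G k g -> Gi Mf G k' g' -> Gi Mf G k (g \o g').
Proof.
move=> F [_ _ HC _] k k' g g' le [Gg [h [[Lg gh hg Pg Ph] [Eg Eh]]]]
  [Gg' [h' [[Lg' gh' hg' Pg' Ph'] [Eg' Eh']]]].
split; first exact: HC.
have Lh : linear h.
  move=> a u v; rewrite -{1}(hg u) -{1}(hg v) -Lg; exact: gh.
have Lh' : linear h'.
  move=> a u v; rewrite -{1}(hg' u) -{1}(hg' v) -Lg'; exact: gh'.
exists (h' \o h); split; [split|split].
- exact: lin_comp.
- by move=> x /=; rewrite gh gh'.
- by move=> x /=; rewrite hg' hg.
- by move=> j w /Pg' /Pg.
- by move=> j w /Ph /Ph'.
- exact: (End_compsub F le Lg Lg' Pg' Eg Eg').
- exact: (End_compsub F (leqnn k) Lh' Lh Ph (End_le F le Eh') Eh).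
Qed.

Lemma Ti_0 (R : comPzRingType) (M : lmodType R) (Mf : nat -> M -> Prop) T :
  Fok Mf -> is_submodule_End1 Mf T -> forall k, Ti Mf T k (fun _ => 0).
Proof. by move=> F [_ H0 _] k; split => //; apply: End_0. Qed.

Lemma Ti_add (R : comPzRingType) (M : lmodType R) (Mf : nat -> M -> Prop) T :
  Fok Mf -> is_submodule_End1 Mf T -> forall k k' xi xi', (k <= k')%N ->
  Ti Mf T k xi -> Ti Mf T k' xi' -> Ti Mf T k (fun w => 1 *: xi w + xi' w).
Proof.
move=> F [_ _ HA] k k' xi xi' le [Tx [Lx Ex]] [Tx' [Lx' Ex']]; split; first exact: HA.
split; first exact: lin_add.
move=> j w Hw; rewrite scale1r; apply: Mf_add => //; first exact: Ex.
apply: Mf_le (Ex' _ _ Hw) => //; by rewrite leq_add2l.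
Qed.

Lemma step_a (R : comPzRingType) (M : lmodType R) (Mf : nat -> M -> Prop) G T :
  Fok Mf -> (forall w, Mf 0%N w) -> is_subgroup_GL1 Mf G ->
  pointwise_weak_Lie Mf T G -> forall z d, ordz Mf z = Some d ->
  forall k xi, (1 <= k)%N -> Ti Mf T k xi ->
  exists g, Gi Mf G k g /\ Mf (k + k + d)%N (g z - z - xi z).
Proof.
move=> F H0 HG HL z d Hz k xi k1 Hxi.
have [g [Gg Hg]] := (HL k k1).1 xi z Hxi.
case: (classic (efin (ordz Mf (xi z)))) => [fin|inf].
  exists g; split => //; apply: ordz_Mf => //.
  rewrite Hz in Hg; apply: (lie_bound (o := ordE Mf xi)) (Hg fin).
  exact: ordE_ge Hxi.2.
exists (@Id _ _); split; first exact: Gi_Id.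
rewrite /Id subrr sub0r; apply: Mf_opp => //; exact: ordz_inf.
Qed.

Lemma step_b (R : comPzRingType) (M : lmodType R) (Mf : nat -> M -> Prop) G T :
  Fok Mf -> (forall w, Mf 0%N w) -> is_submodule_End1 Mf T ->
  pointwise_weak_Lie Mf T G -> forall z d, ordz Mf z = Some d ->
  forall k g, (1 <= k)%N -> Gi Mf G k g ->
  exists xi, Ti Mf T k xi /\ Mf (k + k + d)%N (g z - z - xi z).
Proof.
move=> F H0 HT HL z d Hz k g k1 Hg.
have [xi [Txi Hxi]] := (HL k k1).2 g z Hg.
case: (classic (efin (ordz Mf (fsub g (@Id _ _) z)))) => [fin|inf].
  exists xi; split => //; apply: ordz_Mf => //.
  rewrite Hz in Hxi; apply: (lie_bound (o := ordE Mf (fsub g (@Id _ _)))) (Hxi fin).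
  apply: ordE_ge; case: Hg => _ [h [_ [E _]]]; exact: E.
exists (fun _ => 0); split; first exact: Ti_0.
by rewrite subr0; apply: ordz_inf.
Qed.
Lemma id1 (V : zmodType) (gu u gz z r xz m : V) : u = xz + r ->
  gu + gz - z - (gz - z + (xz + m)) = (gu - u) + r - m.
Proof.
move=> ->; rewrite !opprD !opprK !addrA subrK.
by rewrite [gu + gz - z - gz]addrAC addrK subrK.
Qed.
Lemma id2 (V : zmodType) (xz x'z w e gz z m : V) :
  w = xz + e -> z + e = gz + m -> xz + x'z - w = -(gz - z - x'z) - m.
Proof.
move=> -> E; have -> : e = gz + m - z by rewrite -E addrAC subrr add0r.
rewrite !opprD !opprK !addrA.
rewrite [xz + x'z - xz]addrAC subrr add0r.
by rewrite [- gz + z + x'z]addrC addrA [x'z - gz + z - m]addrAC.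
Qed.

Lemma dir1 (R : comPzRingType) (M : lmodType R) (Mf : nat -> M -> Prop) G T :
  Fok Mf -> (forall w, Mf 0%N w) -> is_subgroup_GL1 Mf G ->
  pointwise_weak_Lie Mf T G -> forall z d, ordz Mf z = Some d -> forall N,
  (forall k, (1 <= k)%N -> forall w, Mf (N + k + d)%N w ->
       filt_closure Mf (Timg Mf T k z) w) ->
  forall k, (N < k)%N -> forall w, Mf (N + k + d)%N w ->
  forall n, exists g, Gi Mf G k g /\ Mf (N + k + d + n)%N (g z - z - w).
Proof.
move=> F H0 HG HL z d Hz N H1 k Nk w Hw; elim=> [|n [g [Gg Hg]]].
  exists (@Id _ _); split; first exact: Gi_Id.
  by rewrite addn0 /Id subrr sub0r; apply: Mf_opp.
pose e := w - (g z - z).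
have He : Mf (N + (k + n) + d)%N e.
  have -> : (N + (k + n) + d = N + k + d + n)%N by lia.
  by rewrite /e -opprB; apply: Mf_opp.
have kn1 : (1 <= k + n)%N by lia.
have [x [[xi Txi ->] [m Hm Em]]] := H1 (k + n)%N kn1 e He (N + (k + n) + d).+1 isT.
have [g' [Gg' Hr]] := step_a F H0 HG HL Hz kn1 Txi.
exists (g \o g'); split; first exact: (Gi_comp F HG (leq_addr n k) Gg Gg').
have [_ [h [[Lg _ _ _ _] [[_ Eg] _]]]] := Gg.
have Ladd : forall u v, g (u + v) = g u + g v.
  by move=> u v; have := Lg 1 u v; rewrite !scale1r.
have Eg' : g' z = (xi z + (g' z - z - xi z)) + z.
  by rewrite [xi z + _]addrC !subrK.
have Ew : w = g z - z + (xi z + m) by rewrite -Em /e addrC subrK.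
rewrite /= Eg' Ladd {1}Ew (@id1 _ _ (xi z + (g' z - z - xi z)) _ _ (g' z - z - xi z) (xi z) m (erefl _)).
have Hxz : Mf (N + (k + n) + d)%N (xi z).
  have -> : xi z = e - m by rewrite Em addrK.
  apply: Mf_sub => //; apply: Mf_le Hm => //; lia.
have Hr' : Mf (N + k + d + n.+1)%N (g' z - z - xi z) by apply: Mf_le Hr => //; lia.
apply: Mf_sub => //; last by apply: Mf_le Hm => //; lia.
apply: Mf_add => //.
have Hu : Mf (N + (k + n) + d)%N (xi z + (g' z - z - xi z)).
  apply: Mf_add => //; apply: Mf_le Hr => //; lia.
have := Eg _ _ Hu; rewrite /fsub /Id; apply: Mf_le => //; lia.
Qed.

Lemma dir2 (R : comPzRingType) (M : lmodType R) (Mf : nat -> M -> Prop) G T :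
  Fok Mf -> (forall w, Mf 0%N w) -> is_submodule_End1 Mf T ->
  pointwise_weak_Lie Mf T G -> forall z d, ordz Mf z = Some d -> forall N,
  (forall k, (1 <= k)%N -> forall w, Mf (N + k + d)%N w ->
       filt_closure Mf (Gorb Mf G k z) (z + w)) ->
  forall k, (N < k)%N -> forall w, Mf (N + k + d)%N w ->
  forall n, exists xi, Ti Mf T k xi /\ Mf (N + k + d + n)%N (xi z - w).
Proof.
move=> F H0 HT HL z d Hz N H2 k Nk w Hw; elim=> [|n [xi [Txi Hxi]]].
  exists (fun _ => 0); split; first exact: Ti_0.
  by rewrite addn0 sub0r; apply: Mf_opp.
pose e := w - xi z.
have He : Mf (N + (k + n) + d)%N e.
  have -> : (N + (k + n) + d = N + k + d + n)%N by lia.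
  by rewrite /e -opprB; apply: Mf_opp.
have kn1 : (1 <= k + n)%N by lia.
have [x [[g Gg ->] [m Hm Em]]] := H2 (k + n)%N kn1 e He (N + (k + n) + d).+1 isT.
have [xi' [Txi' Hr]] := step_b F H0 HT HL Hz kn1 Gg.
exists (fun u => 1 *: xi u + xi' u); split; first exact: (Ti_add F HT (leq_addr n k) Txi Txi').
have Ew : w = xi z + e by rewrite /e addrC subrK.
rewrite scale1r (id2 _ Ew Em).
apply: Mf_sub => //; last by apply: Mf_le Hm => //; lia.
by apply: Mf_opp => //; apply: Mf_le Hr => //; lia.
Qed.

Theorem theorem4p3 (R : comPzRingType) (M : lmodType R) (Mf : nat -> M -> Prop)
  (Mf_sub : forall j, Mf j 0 /\ (forall a u v, Mf j u -> Mf j v -> Mf j (a *: u + v)))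
  (Mf0 : forall w, Mf 0%N w)
  (Mf_decr : forall j w, Mf j.+1 w -> Mf j w)
  (G T : (M -> M) -> Prop)
  (HG : is_subgroup_GL1 Mf G) (HT : is_submodule_End1 Mf T)
  (HLie : pointwise_weak_Lie Mf T G)
  (z : M) (N : nat) :
  ((forall k, (1 <= k)%N ->
      forall w, Mfe Mf (eadd (Some (N + k)%N) (ordz Mf z)) w ->
                filt_closure Mf (Timg Mf T k z) w) ->
   forall k, (N < k)%N ->
      forall w, Mfe Mf (eadd (Some (N + k)%N) (ordz Mf z)) w ->
                filt_closure Mf (Gorb Mf G k z) (z + w)) /\
  ((forall k, (1 <= k)%N ->
      forall w, Mfe Mf (eadd (Some (N + k)%N) (ordz Mf z)) w ->
                filt_closure Mf (Gorb Mf G k z) (z + w)) ->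
   forall k, (N < k)%N ->
      forall w, Mfe Mf (eadd (Some (N + k)%N) (ordz Mf z)) w ->
                filt_closure Mf (Timg Mf T k z) w).
Proof.
have F : Fok Mf by [].
case Hz: (ordz Mf z) => [d|] /=; last first.
  split=> _ k _ w Hw j _.
    exists z; split; first by exists (@Id _ _) => //; apply: Gi_Id.
    by exists w.
  exists 0; split; first by exists (fun _ => 0) => //; apply: Ti_0.
  by exists w => //; rewrite add0r.
split=> H k Nk w Hw j j1.
  have [g [Gg Hg]] := dir1 F Mf0 HG HLie Hz H Nk Hw j.
  exists (g z); split; first by exists g.
  exists (z + w - g z); last by rewrite [g z + _]addrC subrK.
  have -> : z + w - g z = -(g z - z - w) by rewrite opprD opprK opprB addrAC.
  by apply: Mf_opp => //; apply: Mf_le Hg => //; lia.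
have [xi [Txi Hxi]] := dir2 F Mf0 HT HLie Hz H Nk Hw j.
exists (xi z); split; first by exists xi.
exists (w - xi z); last by rewrite [xi z + _]addrC subrK.
rewrite -opprB; by apply: Mf_opp => //; apply: Mf_le Hxi => //; lia.
Qed.
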